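(* Let $I=(N,A,V)$ be an instance with $n=|N|$ agents and additive valuations with externalities. Suppose there is a set $A^t\subseteq A$ of items all of the same type, with $|A^t|$ divisible by $n$. If the reduced instance $I'=(N,A\setminus A^t,V)$ admits an EF1 complete allocation, then $I$ admits an EF1 complete allocation.
   Context: An allocation $\pi=(\pi_1,\dots,\pi_n)$ consists of pairwise disjoint bundles (complete if they cover the item set); $\pi(a)$ is the agent receiving item $a$; $V_i(j,a)\in\mathbb{R}$ is agent $i$'s value when item $a$ goes to $j$; $V_i(\pi)=\sum_{a\text{ assigned in }\pi}V_i(\pi(a),a)$; $\pi^{i\leftrightarrow j}$ swaps the bundles of $i$ and $j$. A complete allocation $\pi$ is EF1 if for all $i,j\in N$ there exist $C$ with $|C|\le1$ and the allocation $\lambda$ with $\lambda_\ell=\pi_\ell\setminus C$ for all $\ell$ such that $V_i(\lambda)\ge V_i(\lambda^{i\leftrightarrow j})$. Let $\Delta_{ij}(a)=V_i(i,a)-V_i(j,a)$. Two items $a,b$ are of the same type if $\Delta_{ij}(a)=\Delta_{ij}(b)$ for all $i,j\in N$. *)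

(* Defs.v *)
From HB Require Import structures.
From mathcomp Require Import all_boot all_order all_algebra.
Set Implicit Arguments. Unset Strict Implicit. Unset Printing Implicit Defensive.
Import Order.TTheory GRing.Theory Num.Theory.
Local Open Scope ring_scope.

Section Defs.
Variables (R : realFieldType) (N A : finType).

(* Agents are the elements of N, items the elements of A.
   V i j a = value for agent i when item a goes to agent j. *)
Definition valuation := N -> N -> A -> R.

(* An allocation: pi a = Some j if item a is in bundle pi_j, None if a is
   unassigned. Bundles are pairwise disjoint by construction. *)
Definition allocation := A -> option N.

Definition complete_on (S : {set A}) (pi : allocation) : Prop :=
  forall a, (a \in S) <-> (pi a != None).

Definition value (V : valuation) (i : N) (pi : allocation) : R :=
  \sum_(a : A) match pi a with Some j => V i j a | None => 0 end.

Definition swap_bundles (i j : N) (pi : allocation) : allocation :=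
  fun a => match pi a with
           | Some k => Some (if k == i then j else if k == j then i else k)
           | None => None
           end.

Definition remove_items (C : {set A}) (pi : allocation) : allocation :=
  fun a => if a \in C then None else pi a.

Definition EF1 (V : valuation) (S : {set A}) (pi : allocation) : Prop :=
  complete_on S pi /\
  forall i j : N, exists C : {set A}, (#|C| <= 1)%N /\
    value V i (swap_bundles i j (remove_items C pi))
      <= value V i (remove_items C pi).

Definition Delta (V : valuation) (i j : N) (a : A) : R := V i i a - V i j a.

Definition same_type (V : valuation) (T : {set A}) : Prop :=
  forall a b, a \in T -> b \in T -> forall i j : N, Delta V i j a = Delta V i j b.

End Defs.

(* Main.v *)
Require Import Defs.
From HB Require Import structures.
From mathcomp Require Import all_boot all_order all_algebra.
Set Implicit Arguments. Unset Strict Implicit. Unset Printing Implicit Defensive.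
Import Order.TTheory GRing.Theory Num.Theory.

Local Open Scope ring_scope.

Definition tv (R : realFieldType) (N A : finType) (V : valuation R N A) i
  (o : option N) (a : A) : R :=
  match o with Some k => V i k a | None => 0 end.

Lemma value_tv (R : realFieldType) (N A : finType) (V : valuation R N A) i pi :
  value V i pi = \sum_a tv V i (pi a) a.
Proof. by []. Qed.

Lemma term_eq (R : realFieldType) (N A : finType) (V : valuation R N A) i j k a :
  V i k a - V i (if k == i then j else if k == j then i else k) a =
  Delta V i j a * ((k == i)%:R - (k == j)%:R).
Proof.
rewrite /Delta; case: (eqVneq k i) => [->|ki].
  case: (eqVneq i j) => [->|ij]; first by rewrite subrr mul0r.
  by rewrite subr0 mulr1.
case: (eqVneq k j) => [->|kj]; first by rewrite sub0r mulrN1 opprB.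
by rewrite subrr subrr mulr0.
Qed.

Theorem lemma3 (R : realFieldType) (N A : finType) (V : valuation R N A)
  (At : {set A}) :
  same_type V At ->
  (#|N| %| #|At|)%N ->
  (exists pi : allocation N A, EF1 V (~: At) pi) ->
  exists pi : allocation N A, EF1 V [set: A] pi.
Proof.
move=> Hty Hdiv [pi' [Hc' Hef]].
pose k := (#|At| %/ #|N|)%N.
pose S := {x in At}.
have E : #|{: S}| = #|{: N * 'I_k}|.
  by rewrite card_sig card_prod card_ord mulnC divnK.
pose g : S -> N * 'I_k := fun s => enum_val (cast_ord E (enum_rank s)).
pose gi : N * 'I_k -> S := fun p => enum_val (cast_ord (esym E) (enum_rank p)).
have gK : cancel g gi.
  by move=> s; rewrite /g /gi enum_valK cast_ordK enum_rankK.
have giK : cancel gi g.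
  by move=> s; rewrite /g /gi enum_valK cast_ordKV enum_rankK.
have pi'N : forall a, a \in At -> pi' a = None.
  move=> a aA; apply/eqP; apply/negP => /negP H.
  by move/Hc': H; rewrite inE aA.
pose pi : allocation N A := fun a =>
  if (insub a : option S) is Some s then Some (g s).1 else pi' a.
exists pi; split.
  move=> a; split=> // _; rewrite /pi.
  case: insubP => [s _ _|aA] //.
  by apply/Hc'; rewrite inE.
move=> i j; have [C [HC Hle]] := Hef i j.
exists (C :\: At); split.
  by apply: leq_trans HC; apply: subset_leq_card; apply: subsetDl.
set L := remove_items (C :\: At) pi.
set L' := remove_items C pi'.
pose c (p : N) : R := (p == i)%:R - (p == j)%:R.
have key : value V i L - value V i (swap_bundles i j L) =
  value V i L' - value V i (swap_bundles i j L') +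
  \sum_(s : S) Delta V i j (val s) * c (g s).1.
  rewrite !value_tv -!sumrB (bigID (mem At)) /=.
  rewrite [X in _ = X + _](bigID (mem At)) /=.
  rewrite [X in _ = X + _ + _]big1; last first.
    by move=> a aA; rewrite /L' /remove_items /swap_bundles pi'N //; case: (a \in C); rewrite /= subrr.
  rewrite add0r addrC; congr (_ + _).
    apply: eq_bigr => a aA; rewrite /swap_bundles.
    have -> : L a = L' a.
      by rewrite /L /L' /remove_items in_setD (negbTE aA) /= /pi insubN.
    by [].
  rewrite big_sub; apply: eq_bigr => s _.
  rewrite /L /remove_items /swap_bundles in_setD (valP s) /= /pi valK /=.
  exact: term_eq.
have cnt : forall x : N, \sum_(p : N * 'I_k) ((p.1 == x)%:R : R) = k%:R.
  move=> x; rewrite -(pair_bigA _ (fun y (t : 'I_k) => ((y == x)%:R : R))) /=.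
  rewrite (bigD1 x) //= [X in _ + X]big1 => [|y yx]; last first.
    by apply: big1 => t _; rewrite (negbTE yx).
  by rewrite addr0 eqxx sumr_const card_ord.
have D0 : \sum_(s : S) Delta V i j (val s) * c (g s).1 = 0.
  case: (pickP (@predT S)) => [s0 _|none]; last by rewrite big_pred0.
  under eq_bigr => s _ do rewrite (Hty (val s) (val s0) (valP s) (valP s0)).
  rewrite -mulr_sumr.
  rewrite (reindex gi) /=; last by exists g => ? _; rewrite ?gK ?giK.
  under eq_bigr => p _ do rewrite giK.
  by rewrite /c sumrB !cnt subrr mulr0.
by rewrite -subr_ge0 key D0 addr0 subr_ge0.
Qed.
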